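(* Let $m \ge 2$ and $n \ge 2m-2$ be integers. Then for every real $r$ with $|r|<1$, $$\int_{-1}^1 \frac{U_n(s)(1-s^2)^{m-\frac{1}{2}}}{s-r}\,ds = \pi(-1)^{m}\left(\frac{1}{2}\right)^{2m-2}\sum_{j=0}^{2m-2}(-1)^j\binom{2m-2}{j}T_{n+3-2m+2j}(r),$$ where the integral is a Cauchy principal-value integral.
   Context: $T_k(s)=\cos(k\cos^{-1}s)$ is the Tchebyshev polynomial of the first kind and $U_k(s)=\frac{\sin((k+1)\cos^{-1}s)}{\sin(\cos^{-1}s)}$ is the Tchebyshev polynomial of the second kind, $k=0,1,2,\dots$. The integral with singular point $s=r\in(-1,1)$ is understood in the Cauchy principal-value sense. $\binom{a}{j}=\frac{a!}{j!(a-j)!}$. *)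

(* Defs.v *)
From Stdlib Require Import Reals.
From Coquelicot Require Import Coquelicot.
Open Scope R_scope.

Definition ChebT (k : nat) (s : R) : R := cos (INR k * acos s).

Definition ChebU (k : nat) (s : R) : R :=
  sin (INR (S k) * acos s) / sin (acos s).

Definition is_PV_integral (f : R -> R) (a b c v : R) : Prop :=
  filterlim (fun eps => RInt f a (c - eps) + RInt f (c + eps) b)
    (at_right 0) (locally v).

(* Main.v *)
Require Import Defs.
From Stdlib Require Import Reals Lra Lia.
From Coquelicot Require Import Coquelicot.
Open Scope R_scope.

Fixpoint Up (k : nat) (s : R) : R :=
  match k with
  | O => 1
  | S k' => match k' with
            | O => 2 * s
            | S k'' => 2 * s * Up k' s - Up k'' s
            end
  end.

Lemma Up_SS k s : Up (S (S k)) s = 2 * s * Up (S k) s - Up k s.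
Proof. reflexivity. Qed.

Lemma Up_cos k y : Up k (cos y) * sin y = sin (INR (S k) * y).
Proof.
  revert k.
  assert (H : forall j, Up j (cos y) * sin y = sin (INR (S j) * y) /\
                        Up (S j) (cos y) * sin y = sin (INR (S (S j)) * y)).
  { induction j as [|k IH].
    - simpl. split.
      + rewrite !Rmult_1_l; reflexivity.
      + replace ((1+1)*y) with (2*y) by ring. rewrite sin_2a. ring.
    - destruct IH as [H1 H2]. split; [exact H2|].
      rewrite Up_SS.
      replace (INR (S (S (S k))) * y) with (INR (S (S k)) * y + y)
        by (rewrite !S_INR; ring).
      replace ((2 * cos y * Up (S k) (cos y) - Up k (cos y)) * sin y)
        with (2 * cos y * (Up (S k) (cos y) * sin y) - Up k (cos y) * sin y) by ring.
      rewrite H1, H2.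
      replace (INR (S k) * y) with (INR (S (S k)) * y - y) by (rewrite !S_INR; ring).
      rewrite sin_plus, sin_minus. ring. }
  intro k; apply H.
Qed.

Lemma Up_cont k x : continuous (Up k) x.
Proof.
  revert k.
  assert (H : forall j, continuous (Up j) x /\ continuous (Up (S j)) x).
  { induction j as [|k [H1 H2]].
    - split; simpl.
      + apply continuous_const.
      + apply (ex_derive_continuous (fun s => 2 * s)). auto_derive; auto.
    - split; [exact H2|].
      apply (continuous_minus (fun s => 2 * s * Up (S k) s) (Up k)); [|exact H1].
      apply (continuous_mult (fun s => 2 * s) (Up (S k))); [|exact H2].
      apply (ex_derive_continuous (fun s => 2 * s)). auto_derive; auto. }
  intro k; apply H.
Qed.

Definition good (r : R) (f : R -> R) := forall x, x <> r -> continuous f x.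

Lemma ex_RInt_left r f e : good r f -> 0 < e -> -1 < r -> ex_RInt f (-1) (r - e).
Proof.
  intros G He Hr. apply (ex_RInt_continuous (V:=R_CompleteNormedModule)). intros z Hz. apply G.
  intro; subst. destruct (Rle_dec (-1) (r - e)).
  - rewrite Rmin_left, Rmax_right in Hz by lra. lra.
  - rewrite Rmin_right, Rmax_left in Hz by lra. lra.
Qed.

Lemma ex_RInt_right r f e : good r f -> 0 < e -> r < 1 -> ex_RInt f (r + e) 1.
Proof.
  intros G He Hr. apply (ex_RInt_continuous (V:=R_CompleteNormedModule)). intros z Hz. apply G.
  intro; subst. destruct (Rle_dec (r + e) 1).
  - rewrite Rmin_left, Rmax_right in Hz by lra. lra.
  - rewrite Rmin_right, Rmax_left in Hz by lra. lra.
Qed.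

Lemma eventually_pos (P : R -> Prop) : (forall e, 0 < e -> P e) -> at_right 0 P.
Proof.
  intros H. exists (mkposreal 1 Rlt_0_1). intros y _ Hy. apply H; exact Hy.
Qed.

Lemma PV_plus r f g v1 v2 : -1 < r < 1 -> good r f -> good r g ->
  is_PV_integral f (-1) 1 r v1 -> is_PV_integral g (-1) 1 r v2 ->
  is_PV_integral (fun s => f s + g s) (-1) 1 r (v1 + v2).
Proof.
  intros Hr Gf Gg H1 H2. unfold is_PV_integral in *.
  apply filterlim_ext_loc with
    (fun e => (RInt f (-1) (r - e) + RInt f (r + e) 1) + (RInt g (-1) (r - e) + RInt g (r + e) 1)).
  - apply eventually_pos. intros e He.
    assert (E1 : RInt (fun s => f s + g s) (-1) (r - e) = RInt f (-1) (r - e) + RInt g (-1) (r - e)).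
    { apply (RInt_plus f g); apply ex_RInt_left; auto; lra. }
    assert (E2 : RInt (fun s => f s + g s) (r + e) 1 = RInt f (r + e) 1 + RInt g (r + e) 1).
    { apply (RInt_plus f g); apply ex_RInt_right; auto; lra. }
    rewrite E1, E2. ring.
  - eapply filterlim_comp_2; [exact H1 | exact H2 | apply (filterlim_plus v1 v2)].
Qed.

Lemma PV_scal r f c v : -1 < r < 1 -> good r f ->
  is_PV_integral f (-1) 1 r v ->
  is_PV_integral (fun s => c * f s) (-1) 1 r (c * v).
Proof.
  intros Hr Gf H1. unfold is_PV_integral in *.
  apply filterlim_ext_loc with
    (fun e => c * (RInt f (-1) (r - e) + RInt f (r + e) 1)).
  - apply eventually_pos. intros e He.
    assert (E1 : RInt (fun s => c * f s) (-1) (r - e) = c * RInt f (-1) (r - e)).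
    { apply (RInt_scal f); apply ex_RInt_left; auto; lra. }
    assert (E2 : RInt (fun s => c * f s) (r + e) 1 = c * RInt f (r + e) 1).
    { apply (RInt_scal f); apply ex_RInt_right; auto; lra. }
    rewrite E1, E2. ring.
  - eapply filterlim_comp; [exact H1 | apply (filterlim_scal_r c v)].
Qed.

Lemma PV_ext r f g v : -1 < r < 1 ->
  (forall s, -1 < s < 1 -> s <> r -> f s = g s) ->
  is_PV_integral f (-1) 1 r v -> is_PV_integral g (-1) 1 r v.
Proof.
  intros Hr E H1. unfold is_PV_integral in *.
  eapply filterlim_ext_loc; [|exact H1].
  assert (Hd : 0 < Rmin (1 - r) (1 + r)) by (apply Rmin_glb_lt; lra).
  exists (mkposreal _ Hd). intros e He Hp. simpl in He, Hp.
  unfold ball in He; simpl in He; unfold AbsRing_ball, abs, minus, plus, opp in He; simpl in He.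
  rewrite Ropp_0, Rplus_0_r in He.
  rewrite Rabs_right in He by lra.
  assert (e < 1 - r) by (eapply Rlt_le_trans; [exact He| apply Rmin_l]).
  assert (e < 1 + r) by (eapply Rlt_le_trans; [exact He| apply Rmin_r]).
  f_equal; apply RInt_ext; intros x Hx.
  - rewrite Rmin_left, Rmax_right in Hx by lra. apply E; lra.
  - rewrite Rmin_left, Rmax_right in Hx by lra. apply E; lra.
Qed.

Lemma at_right_le : filter_le (at_right 0) (locally 0).
Proof. intros P [eps H]. exists eps. intros y Hy _. apply H; exact Hy. Qed.

Lemma lim_affine c k : filterlim (fun e => c + k * e) (at_right 0) (locally c).
Proof.
  apply (filterlim_filter_le_1 (F := locally 0)); [apply at_right_le|].
  assert (H : continuous (fun e => c + k * e) 0).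
  { apply (ex_derive_continuous (fun e => c + k * e)). auto_derive; auto. }
  unfold continuous in H. replace (c + k * 0) with c in H by ring. exact H.
Qed.

Lemma lim_eq_pt {T} {F : (T -> Prop) -> Prop} (f : T -> R) a b :
  a = b -> filterlim f F (locally a) -> filterlim f F (locally b).
Proof. intros ->; auto. Qed.

Lemma PV_cont r g : -1 < r < 1 -> (forall x, continuous g x) ->
  is_PV_integral g (-1) 1 r (RInt g (-1) 1).
Proof.
  intros Hr Cg. unfold is_PV_integral.
  assert (EX : forall a b, ex_RInt g a b).
  { intros a b. apply (ex_RInt_continuous (V:=R_CompleteNormedModule)). intros; apply Cg. }
  pose (F := (fun x => RInt g (-1) x) : R -> R).
  assert (CF : continuous F r).
  { apply (continuous_RInt_1 g (-1) r F).
    exists (mkposreal 1 Rlt_0_1). intros y _. apply (RInt_correct (V:=R_CompleteNormedModule)). apply EX. }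
  apply filterlim_ext_loc with (fun e => F (r + (-1) * e) + (F 1 + (-1) * F (r + 1 * e))).
  - apply eventually_pos. intros e He. unfold F.
    replace (r + -1 * e) with (r - e) by ring. replace (r + 1 * e) with (r + e) by ring.
    f_equal.
    rewrite <- (RInt_Chasles g (-1) (r + e) 1) by apply EX.
    change (plus ?a ?b) with (a + b). ring.
  - apply (lim_eq_pt _ (F r + (F 1 + (-1) * F r))); [unfold F; change (@eq R (RInt g (-1) r + (RInt g (-1) 1 + -1 * RInt g (-1) r)) (RInt g (-1) 1)); ring|].
    eapply filterlim_comp_2.
    + eapply filterlim_comp; [apply lim_affine | exact CF].
    + eapply filterlim_comp_2.
      * apply filterlim_const.
      * eapply filterlim_comp; [eapply filterlim_comp; [apply lim_affine | exact CF]|].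
        apply (filterlim_scal_r (-1) (F r)).
      * apply (filterlim_plus (F 1) ((-1) * F r)).
    + apply (filterlim_plus (F r) (F 1 + (-1) * F r)).
Qed.

Lemma good_plus r f g : good r f -> good r g -> good r (fun s => f s + g s).
Proof. intros Hf Hg x Hx. apply (continuous_plus f g); auto. Qed.

Lemma good_scal r c f : good r f -> good r (fun s => c * f s).
Proof. intros Hf x Hx. apply (continuous_scal (fun _ => c) f); [apply continuous_const | auto]. Qed.

Lemma PV_sum r N (c : nat -> R) (F : nat -> R -> R) (v : nat -> R) : -1 < r < 1 ->
  (forall j, good r (F j)) -> (forall j, is_PV_integral (F j) (-1) 1 r (v j)) ->
  is_PV_integral (fun s => sum_f_R0 (fun j => c j * F j s) N) (-1) 1 r
     (sum_f_R0 (fun j => c j * v j) N) /\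
  good r (fun s => sum_f_R0 (fun j => c j * F j s) N).
Proof.
  intros Hr G P. induction N as [|N [IH1 IH2]]; simpl.
  - split; [apply PV_scal; auto | apply good_scal; auto].
  - split.
    + apply PV_plus; auto. apply good_scal; auto. apply PV_scal; auto.
    + apply good_plus; auto. apply good_scal; auto.
Qed.

Definition sq (s : R) := sqrt (1 - s ^ 2).
Definition Gk (k : nat) (s : R) := Up k s * sq s.
Definition Fk (r : R) (k : nat) (s : R) := Up k s * sq s / (s - r).

Lemma sq_cont x : continuous sq x.
Proof.
  unfold sq. apply (continuous_sqrt_comp (fun s => 1 - s ^ 2)).
  apply (ex_derive_continuous (fun s => 1 - s ^ 2)). auto_derive; auto.
Qed.

Lemma Gk_cont k x : continuous (Gk k) x.
Proof. apply (continuous_mult (Up k) sq). apply Up_cont. apply sq_cont. Qed.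

Lemma Fk_good r k : good r (Fk r k).
Proof.
  intros x Hx. apply (continuous_mult (Gk k) (fun s => / (s - r))).
  apply Gk_cont. apply (continuous_Rinv_comp (fun s => s - r)).
  apply (ex_derive_continuous (fun s => s - r)). auto_derive; auto.
  intro; apply Hx; lra.
Qed.

Lemma sin_INR_PI j : sin (INR j * PI) = 0.
Proof.
  induction j as [|j IH]. simpl. rewrite Rmult_0_l. apply sin_0.
  rewrite S_INR, Rmult_plus_distr_r, Rmult_1_l, sin_plus, IH, sin_PI. ring.
Qed.

Lemma sq_cos y : 0 <= y <= PI -> sq (cos y) = sin y.
Proof.
  intros Hy. unfold sq. replace (1 - cos y ^ 2) with (sin y)².
  apply sqrt_Rsqr. apply sin_ge_0; lra.
  rewrite sin2. unfold Rsqr. ring.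
Qed.

Lemma Jk_theta k : RInt (Gk k) (-1) 1 = RInt (fun y => - sin y * sin (INR (S k) * y)) PI 0.
Proof.
  transitivity (RInt (Gk k) (cos PI) (cos 0)).
  { rewrite cos_PI, cos_0. reflexivity. }
  rewrite <- (RInt_comp (Gk k) cos (fun y => - sin y)).
  - apply RInt_ext. intros x Hx.
    rewrite Rmin_right, Rmax_left in Hx by (pose proof PI_RGT_0; lra).
    unfold Gk. rewrite sq_cos by lra. rewrite <- Up_cos.
    match goal with |- ?a = ?b => change (@eq R a b) end.
    change (scal (- sin x) (Up k (cos x) * sin x)) with (- sin x * (Up k (cos x) * sin x)). ring.
  - intros; apply Gk_cont.
  - intros x _. split.
    + auto_derive; auto. ring.
    + apply (ex_derive_continuous (fun y => - sin y)). auto_derive; auto.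
Qed.

Lemma J0 : RInt (Gk 0) (-1) 1 = PI / 2.
Proof.
  rewrite Jk_theta.
  apply is_RInt_unique.
  set (Phi := fun y => sin (2 * y) / 4 - y / 2).
  replace (PI / 2) with (minus (Phi 0) (Phi PI)).
  2:{ unfold minus, plus, opp, Phi; simpl. replace (2 * 0) with 0 by ring. rewrite sin_0, sin_2PI. field. }
  apply (is_RInt_derive Phi).
  - intros x _. unfold Phi. auto_derive; auto.
    simpl. replace (2 * x) with (x + x) by ring. rewrite cos_plus.
    pose proof (sin2_cos2 x). unfold Rsqr in H. rewrite (Rmult_1_l x).
    replace (cos x * cos x) with (1 - sin x * sin x) by lra. field.
  - intros x _. apply (ex_derive_continuous (fun y => - sin y * sin (INR 1 * y))). auto_derive; auto.
Qed.

Lemma JS k : RInt (Gk (S k)) (-1) 1 = 0.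
Proof.
  rewrite Jk_theta.
  set (A := INR (S (S k))).
  assert (HA : 2 <= A) by (unfold A; rewrite !S_INR; pose proof (pos_INR k); lra).
  set (Phi := fun y => sin ((A + 1) * y) / (2 * (A + 1)) - sin ((A - 1) * y) / (2 * (A - 1))).
  transitivity (minus (Phi 0) (Phi PI)).
  2:{ unfold minus, plus, opp, Phi; simpl. rewrite !Rmult_0_r, sin_0.
      replace (A + 1) with (INR (S (S (S k)))) by (unfold A; rewrite (S_INR (S (S k))); ring).
      replace (A - 1) with (INR (S k)) by (unfold A; rewrite (S_INR (S k)); ring).
      rewrite !sin_INR_PI. field. rewrite !S_INR. pose proof (pos_INR k). split; lra. }
  apply is_RInt_unique.
  apply (is_RInt_derive Phi).
  - intros x _. unfold Phi. auto_derive.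
    + auto.
    + replace ((A + 1) * x) with (A * x + x) by ring.
      replace ((A - 1) * x) with (A * x - x) by ring.
      rewrite cos_plus, cos_minus. field. lra.
  - intros x _. apply (ex_derive_continuous (fun y => - sin y * sin (A * y))). auto_derive; auto.
Qed.

Lemma alg_L (r w c s : R) : w*w = 1 - r*r -> s*s + c*c = 1 -> r - c <> 0 -> 1 - r*c + w*s <> 0 ->
 (1 * c + r * 1 + - (w *
  (((- (r * (1 * - s)) + w * (1 * c)) * / (r + - c) +
    (1 + - (r * c) + w * s) * (- - (1 * - s) * / ((r + - c) * (r + - c)))) *
   / ((1 + - (r * c) + w * s) * / (r + - c))))) = - s ^ 2 / (c - r).
Proof.
  intros Hw Hs Hd HN.
  assert (Hd' : c - r <> 0) by (intro; apply Hd; lra).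
  assert (K : (r * s + w * c) * (r - c) - (1 - r * c + w * s) * s = - w * (1 - r * c + w * s)).
  { transitivity (s * (r*r - 1 + w*w) - w * (c*c + s*s - 1) - w * (1 - r * c + w * s)); [ring|].
    rewrite Hw. replace (c*c + s*s - 1) with 0 by lra. ring. }
  transitivity (c + r - w * (((r * s + w * c) * (r - c) - (1 - r * c + w * s) * s) / ((1 - r * c + w * s) * (r - c)))).
  { field. split; auto. }
  rewrite K.
  transitivity (c + r + w * w / (r - c)). { field. split; auto. }
  rewrite Hw. replace (s^2) with (1 - c*c) by (simpl; lra). field. auto.
Qed.

Lemma alg_R (r w c s : R) : w*w = 1 - r*r -> s*s + c*c = 1 -> c - r <> 0 -> 1 - r*c + w*s <> 0 ->
 (1 * c + r * 1 + - (w *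
  (((- (r * (1 * - s)) + w * (1 * c)) * / (c + - r) +
    (1 + - (r * c) + w * s) * (- (1 * - s) * / ((c + - r) * (c + - r)))) *
   / ((1 + - (r * c) + w * s) * / (c + - r))))) = - s ^ 2 / (c - r).
Proof.
  intros Hw Hs Hd HN.
  assert (K : (r * s + w * c) * (c - r) + (1 - r * c + w * s) * s = w * (1 - r * c + w * s)).
  { transitivity (- (s * (r*r - 1 + w*w) - w * (c*c + s*s - 1)) + w * (1 - r * c + w * s)); [ring|].
    rewrite Hw. replace (c*c + s*s - 1) with 0 by lra. ring. }
  transitivity (c + r - w * (((r * s + w * c) * (c - r) + (1 - r * c + w * s) * s) / ((1 - r * c + w * s) * (c - r)))).
  { field. split; auto. }
  rewrite K.
  transitivity (c + r - w * w / (c - r)). { field. split; auto. }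
  rewrite Hw. replace (s^2) with (1 - c*c) by (simpl; lra). field. auto.
Qed.

Definition NN (r w y : R) := 1 - r * cos y + w * sin y.
Definition PhiL (r w y : R) := sin y + r * y - w * ln (NN r w y / (r - cos y)).
Definition PhiR (r w y : R) := sin y + r * y - w * ln (NN r w y / (cos y - r)).
Definition h0 (r y : R) := - sin y ^ 2 / (cos y - r).

Lemma PhiL_deriv r w y : w*w = 1 - r*r -> cos y < r -> 0 < NN r w y ->
  is_derive (PhiL r w) y (h0 r y).
Proof.
  intros Hw Hc HN. unfold PhiL, h0, NN in *. auto_derive.
  - repeat split; try lra. apply Rmult_lt_0_compat; [lra|]. apply Rinv_0_lt_compat; lra.
  - apply alg_L; auto. pose proof (sin2_cos2 y). unfold Rsqr in H. lra. lra. lra.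
Qed.

Lemma PhiR_deriv r w y : w*w = 1 - r*r -> r < cos y -> 0 < NN r w y ->
  is_derive (PhiR r w) y (h0 r y).
Proof.
  intros Hw Hc HN. unfold PhiR, h0, NN in *. auto_derive.
  - repeat split; try lra. apply Rmult_lt_0_compat; [lra|]. apply Rinv_0_lt_compat; lra.
  - apply alg_R; auto. pose proof (sin2_cos2 y). unfold Rsqr in H. lra. lra. lra.
Qed.

Lemma w_sq r : -1 < r < 1 -> sqrt (1 - r^2) * sqrt (1 - r^2) = 1 - r * r.
Proof. intros Hr. rewrite sqrt_sqrt by nra. ring. Qed.

Lemma w_pos r : -1 < r < 1 -> 0 < sqrt (1 - r^2).
Proof. intros Hr. apply sqrt_lt_R0. nra. Qed.

Lemma NN_pos r w y : 0 <= w -> -1 < r < 1 -> 0 <= y <= PI -> 0 < NN r w y.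
Proof.
  intros Hw Hr Hy. unfold NN. pose proof (sin_ge_0 y (proj1 Hy) (proj2 Hy)).
  pose proof (COS_bound y). assert (0 <= w * sin y) by nra.
  assert (Rabs (cos y) <= 1) by (apply Rabs_le; lra).
  assert (Rabs r < 1) by (apply Rabs_def1; lra).
  assert (Rabs (r * cos y) < 1).
  { rewrite Rabs_mult. pose proof (Rabs_pos r). pose proof (Rabs_pos (cos y)). nra. }
  pose proof (Rle_abs (r * cos y)). lra.
Qed.

Lemma cos_lt_r r e x : -1 < r < 1 -> 0 < e -> e < 1 + r ->
  acos (r - e) <= x <= PI -> cos x < r.
Proof.
  intros Hr He He2 Hx. pose proof (acos_bound (r - e)).
  assert (cos (acos (r - e)) = r - e) by (apply cos_acos; lra).
  destruct (Req_dec x (acos (r - e))) as [E|E].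
  - subst. lra.
  - assert (cos x < cos (acos (r - e))) by (apply cos_decreasing_1; lra). lra.
Qed.

Lemma cos_gt_r r e x : -1 < r < 1 -> 0 < e -> e < 1 - r ->
  0 <= x <= acos (r + e) -> r < cos x.
Proof.
  intros Hr He He2 Hx. pose proof (acos_bound (r + e)).
  assert (cos (acos (r + e)) = r + e) by (apply cos_acos; lra).
  destruct (Req_dec x (acos (r + e))) as [E|E].
  - subst. lra.
  - assert (cos (acos (r + e)) < cos x) by (apply cos_decreasing_1; lra). lra.
Qed.

Lemma left_piece r e : -1 < r < 1 -> 0 < e -> e < 1 + r ->
  RInt (Fk r 0) (-1) (r - e) =
  PhiL r (sqrt (1 - r^2)) (acos (r - e)) - PhiL r (sqrt (1 - r^2)) PI.
Proof.
  intros Hr He He2. set (a := acos (r - e)). set (w := sqrt (1 - r^2)).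
  pose proof (acos_bound (r - e)) as Ha. fold a in Ha.
  pose proof PI_RGT_0.
  transitivity (RInt (Fk r 0) (cos PI) (cos a)).
  { rewrite cos_PI. unfold a. rewrite cos_acos by lra. reflexivity. }
  rewrite <- (RInt_comp (Fk r 0) cos (fun y => - sin y)).
  2:{ intros x Hx. rewrite Rmin_right, Rmax_left in Hx by lra.
      apply Fk_good. pose proof (cos_lt_r r e x Hr He He2 Hx). lra. }
  2:{ intros x _. split.
      + auto_derive; auto. ring.
      + apply (ex_derive_continuous (fun y => - sin y)). auto_derive; auto. }
  transitivity (RInt (h0 r) PI a).
  { apply RInt_ext. intros x Hx. rewrite Rmin_right, Rmax_left in Hx by lra.
    assert (Hc : cos x < r) by (apply (cos_lt_r r e x); auto; unfold a in Hx; lra).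
    match goal with |- ?a = ?b => change (@eq R a b) end.
    change (scal (- sin x) (Fk r 0 (cos x))) with (- sin x * Fk r 0 (cos x)).
    unfold Fk, h0. rewrite sq_cos by lra. simpl. field. lra. }
  apply is_RInt_unique.
  apply (is_RInt_derive (PhiL r w) (h0 r)).
  - intros x Hx. rewrite Rmin_right, Rmax_left in Hx by lra.
    apply PhiL_deriv. apply w_sq; auto. apply (cos_lt_r r e x); auto.
    apply NN_pos; auto. apply Rlt_le, w_pos; auto. lra.
  - intros x Hx. rewrite Rmin_right, Rmax_left in Hx by lra.
    assert (Hc : cos x < r) by (apply (cos_lt_r r e x); auto).
    apply (ex_derive_continuous (h0 r)). unfold h0. auto_derive. lra.
Qed.

Lemma right_piece r e : -1 < r < 1 -> 0 < e -> e < 1 - r ->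
  RInt (Fk r 0) (r + e) 1 =
  PhiR r (sqrt (1 - r^2)) 0 - PhiR r (sqrt (1 - r^2)) (acos (r + e)).
Proof.
  intros Hr He He2. set (b := acos (r + e)). set (w := sqrt (1 - r^2)).
  pose proof (acos_bound (r + e)) as Hb. fold b in Hb.
  pose proof PI_RGT_0.
  transitivity (RInt (Fk r 0) (cos b) (cos 0)).
  { rewrite cos_0. unfold b. rewrite cos_acos by lra. reflexivity. }
  rewrite <- (RInt_comp (Fk r 0) cos (fun y => - sin y)).
  2:{ intros x Hx. rewrite Rmin_right, Rmax_left in Hx by lra.
      apply Fk_good. pose proof (cos_gt_r r e x Hr He He2 Hx). lra. }
  2:{ intros x _. split.
      + auto_derive; auto. ring.
      + apply (ex_derive_continuous (fun y => - sin y)). auto_derive; auto. }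
  transitivity (RInt (h0 r) b 0).
  { apply RInt_ext. intros x Hx. rewrite Rmin_right, Rmax_left in Hx by lra.
    assert (Hc : r < cos x) by (apply (cos_gt_r r e x); auto; unfold b in Hx; lra).
    match goal with |- ?a = ?b => change (@eq R a b) end.
    change (scal (- sin x) (Fk r 0 (cos x))) with (- sin x * Fk r 0 (cos x)).
    unfold Fk, h0. rewrite sq_cos by lra. simpl. field. lra. }
  apply is_RInt_unique.
  apply (is_RInt_derive (PhiR r w) (h0 r)).
  - intros x Hx. rewrite Rmin_right, Rmax_left in Hx by lra.
    apply PhiR_deriv. apply w_sq; auto. apply (cos_gt_r r e x); auto.
    apply NN_pos; auto. apply Rlt_le, w_pos; auto. lra.
  - intros x Hx. rewrite Rmin_right, Rmax_left in Hx by lra.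
    assert (Hc : r < cos x) by (apply (cos_gt_r r e x); auto).
    apply (ex_derive_continuous (h0 r)). unfold h0. auto_derive. lra.
Qed.

Lemma acos_cont x : -1 < x < 1 -> continuous acos x.
Proof.
  intros Hx. apply continuity_pt_filterlim. apply derivable_continuous_pt.
  apply derivable_pt_acos; auto.
Qed.

Lemma I0 r : -1 < r < 1 ->
  is_PV_integral (Fk r 0) (-1) 1 r (- PI * cos (INR 1 * acos r)).
Proof.
  intros Hr. unfold is_PV_integral.
  set (w := sqrt (1 - r^2)).
  assert (Hw : 0 < w) by (apply w_pos; auto).
  set (Q := fun t => sin (acos t) + r * acos t - w * ln (NN r w (acos t))).
  assert (CQ : continuous Q r).
  { apply (continuous_comp acos (fun a => sin a + r * a - w * ln (NN r w a))).
    apply acos_cont; auto.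
    apply (ex_derive_continuous (fun a => sin a + r * a - w * ln (NN r w a))).
    unfold NN. auto_derive. repeat split.
    apply (NN_pos r w (acos r)); [lra|auto|apply acos_bound]. }
  apply filterlim_ext_loc with (fun e => Q (r + (-1) * e) + ((-1) * Q (r + 1 * e) + (- r * PI))).
  - assert (Hd : 0 < Rmin (1 - r) (1 + r)) by (apply Rmin_glb_lt; lra).
    exists (mkposreal _ Hd). intros e He Hp. change R in e. simpl in He, Hp.
    unfold ball in He; simpl in He; unfold AbsRing_ball, abs, minus, plus, opp in He; simpl in He.
    rewrite Ropp_0, Rplus_0_r in He.
    rewrite Rabs_right in He by lra.
    assert (e < 1 - r) by (eapply Rlt_le_trans; [exact He| apply Rmin_l]).
    assert (e < 1 + r) by (eapply Rlt_le_trans; [exact He| apply Rmin_r]).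
    rewrite left_piece, right_piece by auto. fold w.
    assert (E1 : r + -1 * e = r - e) by ring. assert (E2 : r + 1 * e = r + e) by ring.
    rewrite E1, E2.
    unfold PhiL, PhiR, Q.
    rewrite cos_acos by lra. rewrite cos_acos by lra.
    replace (r - (r - e)) with e by ring. replace (r + e - r) with e by ring.
    assert (HPI : NN r w PI / (r - cos PI) = 1).
    { unfold NN. rewrite cos_PI, sin_PI. field. lra. }
    assert (HZ : NN r w 0 / (cos 0 - r) = 1).
    { unfold NN. rewrite cos_0, sin_0. field. lra. }
    rewrite HPI, HZ, ln_1, sin_PI, sin_0.
    rewrite !ln_div; auto.
    ring.
    apply NN_pos; [lra|auto|apply acos_bound].
    apply NN_pos; [lra|auto|apply acos_bound].
  - apply (lim_eq_pt _ (Q r + ((-1) * Q r + (- r * PI)))).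
    { simpl. rewrite Rmult_1_l, cos_acos by lra. ring. }
    eapply filterlim_comp_2.
    + eapply filterlim_comp; [apply lim_affine | exact CQ].
    + eapply filterlim_comp_2.
      * eapply filterlim_comp; [eapply filterlim_comp; [apply lim_affine | exact CQ]|].
        apply (filterlim_scal_r (-1) (Q r)).
      * apply filterlim_const.
      * apply (filterlim_plus ((-1) * Q r) (- r * PI)).
    + apply (filterlim_plus (Q r) ((-1) * Q r + - r * PI)).
Qed.

Lemma Gk_good r k : good r (Gk k).
Proof. intros x _. apply Gk_cont. Qed.

Lemma Ik r : -1 < r < 1 -> forall k,
  is_PV_integral (Fk r k) (-1) 1 r (- PI * cos (INR (S k) * acos r)).
Proof.
  intros Hr.
  set (phi := acos r).
  assert (Hc : cos phi = r) by (apply cos_acos; lra).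
  assert (H : forall k, is_PV_integral (Fk r k) (-1) 1 r (- PI * cos (INR (S k) * phi)) /\
                        is_PV_integral (Fk r (S k)) (-1) 1 r (- PI * cos (INR (S (S k)) * phi))).
  { induction k as [|k [IH1 IH2]].
    - split; [apply I0; exact Hr|].
      apply PV_ext with (fun s => 2 * Gk 0 s + 2 * r * Fk r 0 s); [exact Hr| |].
      { intros s Hs Hsr. unfold Gk, Fk. simpl. field. lra. }
      replace (- PI * cos (INR 2 * phi)) with (2 * RInt (Gk 0) (-1) 1 + 2 * r * (- PI * cos (INR 1 * phi))).
      2:{ rewrite J0. simpl. replace ((1 + 1) * phi) with (phi + phi) by ring.
          rewrite cos_plus, Rmult_1_l, Hc. pose proof (sin2_cos2 phi). unfold Rsqr in H.
          rewrite Hc in H. replace (sin phi * sin phi) with (1 - r * r) by lra. field. }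
      apply PV_plus; [exact Hr| | | |].
      + apply good_scal, Gk_good.
      + apply good_scal, Fk_good.
      + apply (PV_scal r (Gk 0) 2); [exact Hr| |]. apply Gk_good. apply (PV_cont r (Gk 0)); [exact Hr|]. apply Gk_cont.
      + apply (PV_scal r (Fk r 0) (2 * r)); [exact Hr| |]. apply Fk_good. apply I0; exact Hr.
    - split; [exact IH2|].
      apply PV_ext with (fun s => (2 * Gk (S k) s + 2 * r * Fk r (S k) s) + (-1) * Fk r k s); [exact Hr| |].
      { intros s Hs Hsr. unfold Gk, Fk. rewrite Up_SS. field. lra. }
      replace (- PI * cos (INR (S (S (S k))) * phi)) with
        ((2 * RInt (Gk (S k)) (-1) 1 + 2 * r * (- PI * cos (INR (S (S k)) * phi))) + (-1) * (- PI * cos (INR (S k) * phi))).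
      2:{ rewrite JS. 
          replace (INR (S (S (S k))) * phi) with (INR (S (S k)) * phi + phi) by (rewrite (S_INR (S (S k))); ring).
          replace (INR (S k) * phi) with (INR (S (S k)) * phi - phi) by (rewrite (S_INR (S k)); ring).
          rewrite cos_plus, cos_minus, Hc. ring. }
      apply (PV_plus r (fun s => 2 * Gk (S k) s + 2 * r * Fk r (S k) s) (fun s => -1 * Fk r k s)
        (2 * RInt (Gk (S k)) (-1) 1 + 2 * r * (- PI * cos (INR (S (S k)) * phi))) ((-1) * (- PI * cos (INR (S k) * phi)))); [exact Hr| | | |].
      + apply good_plus; [apply good_scal, Gk_good | apply good_scal, Fk_good].
      + apply good_scal, Fk_good.
      + apply (PV_plus r (fun s => 2 * Gk (S k) s) (fun s => 2 * r * Fk r (S k) s)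
          (2 * RInt (Gk (S k)) (-1) 1) (2 * r * (- PI * cos (INR (S (S k)) * phi)))); [exact Hr| | | |].
        * apply good_scal, Gk_good.
        * apply good_scal, Fk_good.
        * apply (PV_scal r (Gk (S k)) 2); [exact Hr| |]. apply Gk_good. apply (PV_cont r (Gk (S k))); [exact Hr|]. apply Gk_cont.
        * apply (PV_scal r (Fk r (S k)) (2 * r)); [exact Hr| |]. apply Fk_good. exact IH2.
      + apply (PV_scal r (Fk r k) (-1)); [exact Hr| |]. apply Fk_good. exact IH1. }
  intro k; exact (proj1 (H k)).
Qed.

Definition Asum (f : R -> R) (L : nat) (x : R) :=
  sum_f_R0 (fun j => (-1)^j * Binomial.C L j * f (x - INR L + 2 * INR j)) L.

Lemma pascal_sum L (g : nat -> R) :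
  sum_f_R0 (fun j => Binomial.C (S L) j * g j) (S L) =
  sum_f_R0 (fun j => Binomial.C L j * g j) L + sum_f_R0 (fun j => Binomial.C L j * g (S j)) L.
Proof.
  destruct L as [|L].
  - simpl. rewrite !C_n_0. replace (Binomial.C 1 1) with 1 by (symmetry; apply C_n_n). ring.
  - rewrite (decomp_sum _ (S (S L))) by lia. simpl pred. rewrite tech5.
    rewrite (decomp_sum (fun j => Binomial.C (S L) j * g j) (S L)) by lia. simpl pred.
    rewrite (tech5 (fun j => Binomial.C (S L) j * g (S j))).
    rewrite (sum_eq (fun i => Binomial.C (S (S L)) (S i) * g (S i))
               (fun i => Binomial.C (S L) i * g (S i) + Binomial.C (S L) (S i) * g (S i))).
    2:{ intros i Hi. rewrite <- pascal by lia. ring. }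
    rewrite plus_sum. rewrite !C_n_0, !C_n_n. ring.
Qed.

Lemma Asum_S f L x : Asum f (S L) x = Asum f L (x - 1) - Asum f L (x + 1).
Proof.
  unfold Asum.
  set (g := fun j => (-1)^j * f (x - INR (S L) + 2 * INR j)).
  rewrite (sum_eq _ (fun j => Binomial.C (S L) j * g j)) by (intros; unfold g; ring).
  rewrite pascal_sum. rewrite <- minus_sum, <- plus_sum.
  apply sum_eq. intros j _. unfold g.
  replace (x - INR (S L) + 2 * INR j) with (x - 1 - INR L + 2 * INR j) by (rewrite S_INR; ring).
  replace (x - INR (S L) + 2 * INR (S j)) with (x + 1 - INR L + 2 * INR j) by (rewrite !S_INR; ring).
  simpl pow. ring.
Qed.

Lemma sin2_shift t x : sin t ^ 2 * sin (x * t) =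
  (-1/4) * (sin ((x - 1 - 1) * t) - sin ((x - 1 + 1) * t) - (sin ((x + 1 - 1) * t) - sin ((x + 1 + 1) * t))).
Proof.
  replace ((x - 1 - 1) * t) with (x * t - 2 * t) by ring.
  replace ((x - 1 + 1) * t) with (x * t) by ring.
  replace ((x + 1 - 1) * t) with (x * t) by ring.
  replace ((x + 1 + 1) * t) with (x * t + 2 * t) by ring.
  rewrite sin_minus, sin_plus, cos_2a_sin. field.
Qed.

Lemma sin_pow M t x : sin t ^ (2 * M) * sin (x * t) = (-1/4)^M * Asum (fun u => sin (u * t)) (2 * M) x.
Proof.
  revert x. induction M as [|M IH]; intros x.
  - unfold Asum. simpl. rewrite C_n_0. replace (x - 0 + 2 * 0) with x by ring. ring.
  - replace (2 * S M)%nat with (S (S (2 * M))) by lia.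
    rewrite Asum_S, !Asum_S.
    set (A := Asum (fun u => sin (u * t)) (2 * M)).
    replace (sin t ^ S (S (2 * M))) with (sin t ^ 2 * sin t ^ (2 * M)) by (simpl; ring).
    transitivity ((-1/4) * ((-1/4)^M * A (x - 1 - 1) - (-1/4)^M * A (x - 1 + 1)
                   - ((-1/4)^M * A (x + 1 - 1) - (-1/4)^M * A (x + 1 + 1)))).
    2:{ simpl pow. ring. }
    rewrite <- !IH. rewrite (Rmult_comm (sin t ^ 2)), Rmult_assoc, sin2_shift. ring.
Qed.

Theorem mainTheorem2 (m n : nat) (Hm : (2 <= m)%nat) (Hn : (2 * m - 2 <= n)%nat)
  (r : R) (Hr : Rabs r < 1) :
  is_PV_integral
    (fun s => ChebU n s * ((1 - s ^ 2) ^ (m - 1) * sqrt (1 - s ^ 2)) / (s - r))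
    (-1) 1 r
    (PI * (-1) ^ m * (1 / 2) ^ (2 * m - 2) *
       sum_f_R0 (fun j => (-1) ^ j * Binomial.C (2 * m - 2) j *
                          ChebT (n + 3 - 2 * m + 2 * j) r) (2 * m - 2)).
Proof.
  assert (Hr' : -1 < r < 1) by (apply Rabs_def2 in Hr; lra).
  destruct m as [|M]; [lia|].
  replace (S M - 1)%nat with M by lia.
  replace (2 * S M - 2)%nat with (2 * M)%nat by lia.
  set (K0 := (n - 2 * M)%nat).
  set (c := fun j => (-1/4)^M * ((-1)^j * Binomial.C (2 * M) j)).
  set (v := fun j => - PI * cos (INR (S (K0 + 2 * j)) * acos r)).
  destruct (PV_sum r (2 * M) c (fun j => Fk r (K0 + 2 * j)) v Hr')
    as [HPV _].
  { intro j. apply Fk_good. }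
  { intro j. apply Ik; auto. }
  replace (PI * (-1) ^ S M * (1 / 2) ^ (2 * M) *
     sum_f_R0 (fun j => (-1) ^ j * Binomial.C (2 * M) j *
        ChebT (n + 3 - 2 * S M + 2 * j) r) (2 * M))
    with (sum_f_R0 (fun j => c j * v j) (2 * M)).
  2:{ rewrite scal_sum. apply sum_eq. intros j Hj. unfold c, v, ChebT.
      replace (n + 3 - 2 * S M + 2 * j)%nat with (S (K0 + 2 * j)) by (unfold K0; lia).
      rewrite pow_mult. set (q := (1/2)^2).
      replace (-1/4) with (-1 * q) by (unfold q; field).
      rewrite Rpow_mult_distr. change ((-1)^S M) with (-1 * (-1)^M). ring. }
  eapply PV_ext; [exact Hr' | | exact HPV].
  intros s Hs Hsr.
  set (t := acos s).
  assert (Ht : 0 < t < PI) by (apply acos_bound_lt; lra).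
  assert (Hst : 0 < sin t) by (apply sin_gt_0; lra).
  assert (Hct : cos t = s) by (apply cos_acos; lra).
  assert (Hs2 : 1 - s ^ 2 = sin t ^ 2).
  { rewrite <- Hct. pose proof (sin2_cos2 t). unfold Rsqr in H. simpl. lra. }
  unfold Fk.
  transitivity (sum_f_R0 (fun j => c j * Up (K0 + 2 * j) s) (2 * M) * (sq s / (s - r))).
  { rewrite (Rmult_comm _ (sq s / (s - r))), scal_sum. apply sum_eq. intros j _. unfold Rdiv. ring. }
  unfold sq.
  assert (KEY : sum_f_R0 (fun j => c j * Up (K0 + 2 * j) s) (2 * M) = ChebU n s * (1 - s ^ 2) ^ M).
  { apply Rmult_eq_reg_r with (sin t); [|lra].
    transitivity (sin t ^ (2 * M) * sin (INR (S n) * t)).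
    - rewrite sin_pow. unfold Asum. rewrite (Rmult_comm _ (sin t)), !scal_sum.
      apply sum_eq. intros j Hj. unfold c.
      replace (Up (K0 + 2 * j) s) with (Up (K0 + 2 * j) (cos t)) by (rewrite Hct; reflexivity).
      assert (E : INR (S (K0 + 2 * j)) = INR (S n) - INR (2 * M) + 2 * INR j).
      { assert (HH : (S (K0 + 2 * j) + 2 * M = S n + 2 * j)%nat) by (unfold K0; lia).
        apply (f_equal INR) in HH. rewrite !plus_INR in HH. rewrite (mult_INR 2 j) in HH.
        simpl (INR 2) in HH. lra. }
      rewrite <- E. rewrite (Rmult_assoc (c j)). unfold c. rewrite Up_cos. ring.
    - unfold ChebU. fold t. rewrite Hs2, <- pow_mult. field. lra. }
  rewrite KEY. unfold Rdiv. ring.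
Qed.
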